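(* Each of the sets $\{1,2,3\}$, $\{1,2,3,4\}$, $\{1,2,3,4,5\}$, $\{1,2,3,4,6\}$, $\{1,2,3,4,5,6\}$ belongs to $\mathcal{I}_1$.
   Context: For a summable sequence $\mathbf{x}=(x_n)$ of positive reals, $\mathcal{A}(\mathbf{x})=\{\sum_{n\in A}x_n: A\subseteq\mathbb{N}\}$ is its achievement set and its cardinal function $f$ assigns to $x\in\mathcal{A}(\mathbf{x})$ the cardinality (a positive integer, $\omega$, or $\mathfrak{c}$) of $\{(\varepsilon_n)\in\{0,1\}^{\mathbb{N}}:\sum\varepsilon_nx_n=x\}$. $\mathcal{I}_1$ is the family of ranges of cardinal functions of such sequences whose achievement set is a single closed interval. *)

(* Defs.v *)
From Stdlib Require Import Reals List.
From Coquelicot Require Import Coquelicot.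
Open Scope R_scope.

Inductive cardinal := Fin (n : nat) | Omega | Continuum.

Definition subsum (x : nat -> R) (e : nat -> bool) : R :=
  Series (fun n => if e n then x n else 0).

Definition achievement (x : nat -> R) (t : R) : Prop :=
  exists e : nat -> bool, subsum x e = t.

Definition fiber (x : nat -> R) (t : R) (e : nat -> bool) : Prop :=
  subsum x e = t.

Definition card_is (F : (nat -> bool) -> Prop) (k : cardinal) : Prop :=
  match k with
  | Fin n => exists l : list (nat -> bool),
      length l = n /\ NoDup l /\ forall e, F e <-> In e l
  | Omega => exists f : nat -> (nat -> bool),
      (forall m n, f m = f n -> m = n) /\ forall e, F e <-> exists n, f n = e
  | Continuum => exists g : (nat -> bool) -> (nat -> bool),
      (forall s s', g s = g s' -> s = s') /\ forall e, F e <-> exists s, g s = e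
  end.

Definition in_cardinal_range (x : nat -> R) (k : cardinal) : Prop :=
  exists t, achievement x t /\ card_is (fiber x t) k.

Definition in_I1 (S : cardinal -> Prop) : Prop :=
  exists x : nat -> R,
    (forall n, 0 < x n) /\ ex_series x /\
    (exists a b, a <= b /\ forall t, achievement x t <-> a <= t <= b) /\
    (forall k, in_cardinal_range x k <-> S k).

(* Main.v *)
Require Import Defs.
From Stdlib Require Import Reals List Lra Lia ZArith ClassicalEpsilon Classical FunctionalExtensionality.
From Coquelicot Require Import Coquelicot.
Open Scope R_scope.

Definition g (n:nat) : R := (/2)^(S n).

Lemma g_pos n : 0 < g n.
Proof. unfold g. apply pow_lt. lra. Qed.

Lemma is_series_g : is_series g 1.
Proof.
  assert (Hq : Rabs (/2) < 1) by (rewrite Rabs_pos_eq; lra).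
  assert (H := is_series_geom (/2) Hq).
  apply (is_series_scal_l (/2)) in H.
  replace 1 with (scal (/2) (/(1 - /2))) by (unfold scal; simpl; unfold mult; simpl; field).
  eapply is_series_ext; [|exact H]. intro n. unfold g, scal; simpl. unfold mult; simpl. reflexivity.
Qed.

Lemma ex_g : ex_series g.
Proof. eexists; exact is_series_g. Qed.

Lemma Series_g : Series g = 1.
Proof. apply is_series_unique, is_series_g. Qed.

Lemma Series_zero : Series (fun _ => 0) = 0.
Proof.
  rewrite (Series_ext (fun _ => 0) (fun n => 0 * g n)) by (intro; ring).
  rewrite Series_scal_l. ring.
Qed.

Lemma ex_mask (x : nat -> R) (e : nat -> bool) :
  (forall n, 0 <= x n) -> ex_series x -> ex_series (fun n => if e n then x n else 0).
Proof.
  intros Hp Hx. apply (@ex_series_le R_AbsRing R_CompleteNormedModule _ x); [|exact Hx].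
  intro n. change (norm ?a) with (Rabs a). destruct (e n).
  - rewrite Rabs_pos_eq; auto; lra.
  - rewrite Rabs_R0; auto.
Qed.

Definition sub (e : nat -> bool) := subsum g e.
Definition tl (e : nat -> bool) : nat -> bool := fun n => e (S n).
Definition consb (b : bool) (e : nat -> bool) : nat -> bool :=
  fun n => match n with O => b | S m => e m end.

Lemma ex_mask_g (e : nat -> bool) : ex_series (fun n => if e n then g n else 0).
Proof. apply ex_mask; [intro; left; apply g_pos | exact ex_g]. Qed.

Lemma sub_bounds e : 0 <= sub e <= 1.
Proof.
  unfold sub, subsum. split.
  - apply Rle_trans with (Series (fun _ => 0)); [rewrite Series_zero; lra|].
    apply Series_le; [|apply ex_mask_g].
    intro n. destruct (e n); split; try lra; left; apply g_pos.
  - rewrite <- Series_g. apply Series_le; [|apply ex_g].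
    intro n. assert (H := g_pos n). destruct (e n); lra.
Qed.

Lemma sub_cons (e : nat -> bool) : sub e = (if e O then /2 else 0) + /2 * sub (tl e).
Proof.
  unfold sub, subsum. rewrite Series_incr_1 by apply ex_mask_g.
  f_equal.
  - destruct (e O); unfold g; simpl; ring.
  - rewrite <- Series_scal_l. apply Series_ext. intro n. unfold tl, g.
    destruct (e (S n)); simpl; ring.
Qed.

Lemma sub_consb b e : sub (consb b e) = (if b then /2 else 0) + /2 * sub e.
Proof. rewrite sub_cons. reflexivity. Qed.

Lemma sub0_false k : forall e, sub e = 0 -> e k = false.
Proof.
  induction k; intros e H; rewrite sub_cons in H;
    assert (B := sub_bounds (tl e)).
  - destruct (e O); auto. lra.
  - apply (IHk (tl e)). destruct (e O); lra.
Qed.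

Lemma sub1_true k : forall e, sub e = 1 -> e k = true.
Proof.
  induction k; intros e H; rewrite sub_cons in H;
    assert (B := sub_bounds (tl e)).
  - destruct (e O); auto. lra.
  - apply (IHk (tl e)). destruct (e O); lra.
Qed.

Fixpoint rem (u : R) (n : nat) : R :=
  match n with
  | O => u
  | S m => if Rle_dec 1 (2 * rem u m) then 2 * rem u m - 1 else 2 * rem u m
  end.
Definition dig (u : R) (n : nat) : bool := if Rle_dec 1 (2 * rem u n) then true else false.

Lemma rem_bounds u n : 0 <= u <= 1 -> 0 <= rem u n <= 1.
Proof. intro H; induction n; simpl; auto. destruct Rle_dec; lra. Qed.

Lemma partial u n : sum_n (fun i => if dig u i then g i else 0) n = u - rem u (S n) * (/2)^(S n).
Proof.
  induction n.
  - rewrite sum_O. unfold dig, g; simpl. destruct Rle_dec; field.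
  - rewrite sum_Sn, IHn. unfold plus; simpl. unfold dig, g.
    set (r0 := rem u n). simpl rem. fold r0.
    destruct (Rle_dec 1 (2 * r0)); destruct Rle_dec; simpl; field.
Qed.

Lemma exists_rep u : 0 <= u <= 1 -> exists e, sub e = u.
Proof.
  intro Hu. exists (dig u). unfold sub, subsum. apply is_series_unique.
  change (is_lim_seq (sum_n (fun i => if dig u i then g i else 0)) u).
  apply (is_lim_seq_le_le (fun n => u - (/2)^n) _ (fun _ => u)).
  - intro n. rewrite partial. assert (B := rem_bounds u (S n) Hu).
    assert (0 < (/2)^(S n)) by (apply pow_lt; lra).
    assert ((/2)^(S n) <= (/2)^n) by (simpl; assert (0 < (/2)^n) by (apply pow_lt; lra); lra).
    split; [|nra]. nra.
  - replace (Finite u) with (Finite (u - 0)) by (f_equal; ring).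
    apply is_lim_seq_minus'; [apply is_lim_seq_const|]. apply is_lim_seq_geom.
    rewrite Rabs_pos_eq; lra.
  - apply is_lim_seq_const.
Qed.

Definition D (u : R) := exists (k : Z) (n : nat), u * 2^n = IZR k.

Definition allF : nat -> bool := fun _ => false.
Definition allT : nat -> bool := fun _ => true.

Lemma sub_allF : sub allF = 0.
Proof. unfold sub, subsum, allF. apply Series_zero. Qed.
Lemma sub_allT : sub allT = 1.
Proof. unfold sub, subsum, allT. apply Series_g. Qed.

Lemma consb_inj b e1 e2 : consb b e1 = consb b e2 -> e1 = e2.
Proof. intro H. extensionality n. exact (f_equal (fun f => f (S n)) H). Qed.

Lemma two_reps n : forall u k, u * 2^n = IZR k -> 0 < u < 1 ->
  exists e1 e2, e1 <> e2 /\ sub e1 = u /\ sub e2 = u.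
Proof.
  induction n; intros u k Hk Hu.
  - simpl in Hk. rewrite Rmult_1_r in Hk. subst u.
    destruct Hu as [H1 H2]. apply lt_IZR in H1, H2. lia.
  - assert (Hk' : (2 * u) * 2^n = IZR k) by (rewrite <- Hk; simpl; ring).
    destruct (Rtotal_order (2*u) 1) as [Hl|[He|Hg]].
    + destruct (IHn (2*u) k Hk') as [e1 [e2 [Hn [H1 H2]]]]; [lra|].
      exists (consb false e1), (consb false e2). split; [intro E; apply Hn; eapply consb_inj; eauto|].
      rewrite !sub_consb, H1, H2. split; field.
    + exists (consb true allF), (consb false allT). split.
      * intro E. assert (X := f_equal (fun f => f O) E). simpl in X. discriminate.
      * rewrite !sub_consb, sub_allF, sub_allT. split; lra.
    + assert (Hk2 : (2 * u - 1) * 2^n = IZR (k - 2 ^ Z.of_nat n)).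
      { rewrite minus_IZR, <- pow_IZR. rewrite <- Hk'. ring. }
      destruct (IHn (2*u - 1) _ Hk2) as [e1 [e2 [Hn [H1 H2]]]]; [lra|].
      exists (consb true e1), (consb true e2). split; [intro E; apply Hn; eapply consb_inj; eauto|].
      rewrite !sub_consb, H1, H2. split; field.
Qed.

Definition EF (e : nat -> bool) := exists N, forall j, (N <= j)%nat -> e j = false.
Definition ET (e : nat -> bool) := exists N, forall j, (N <= j)%nat -> e j = true.

Lemma EF_ET e : EF e -> ET e -> False.
Proof.
  intros [N1 H1] [N2 H2]. assert (A := H1 (N1 + N2)%nat ltac:(lia)).
  assert (B := H2 (N1 + N2)%nat ltac:(lia)). congruence.
Qed.

Lemma first_differ e e' : e O <> e' O -> sub e = sub e' ->
  sub e = /2 /\ ((EF e /\ ET e') \/ (ET e /\ EF e')).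
Proof.
  intros Hd Hs. rewrite (sub_cons e), (sub_cons e') in *.
  assert (B1 := sub_bounds (tl e)). assert (B2 := sub_bounds (tl e')).
  destruct (e O) eqn:E0; destruct (e' O) eqn:E0'; try congruence.
  - assert (Z1 : sub (tl e) = 0) by lra. assert (Z2 : sub (tl e') = 1) by lra.
    split; [lra|]. left. split.
    + exists 1%nat. intros [|j] Hj; [lia|]. exact (sub0_false j _ Z1).
    + exists 1%nat. intros [|j] Hj; [lia|]. exact (sub1_true j _ Z2).
  - assert (Z1 : sub (tl e) = 1) by lra. assert (Z2 : sub (tl e') = 0) by lra.
    split; [lra|]. right. split.
    + exists 1%nat. intros [|j] Hj; [lia|]. exact (sub1_true j _ Z1).
    + exists 1%nat. intros [|j] Hj; [lia|]. exact (sub0_false j _ Z2).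
Qed.

Lemma EF_tl e : EF (tl e) -> EF e.
Proof. intros [N H]. exists (S N). intros [|j] Hj; [lia|]. apply H. lia. Qed.
Lemma ET_tl e : ET (tl e) -> ET e.
Proof. intros [N H]. exists (S N). intros [|j] Hj; [lia|]. apply H. lia. Qed.

Lemma struct k : forall e e', e k <> e' k -> sub e = sub e' ->
  D (sub e) /\ 0 < sub e < 1 /\ ((EF e /\ ET e') \/ (ET e /\ EF e')).
Proof.
  induction k; intros e e' Hd Hs.
  - destruct (first_differ e e' Hd Hs) as [H1 H2]. rewrite H1. repeat split; try lra; auto.
    exists 1%Z, 1%nat. simpl. field.
  - destruct (Bool.bool_dec (e O) (e' O)) as [Heq|Hne].
    + assert (Hs' : sub (tl e) = sub (tl e')).
      { rewrite (sub_cons e), (sub_cons e'), Heq in Hs. lra. }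
      destruct (IHk (tl e) (tl e') Hd Hs') as [[kk [n Hn]] [Hb Hst]].
      rewrite (sub_cons e). split; [|split].
      * destruct (e O).
        -- exists (2 ^ Z.of_nat n + kk)%Z, (S n). rewrite plus_IZR, <- pow_IZR, <- Hn. simpl. field.
        -- exists kk, (S n). rewrite <- Hn. simpl. field.
      * destruct (e O); lra.
      * destruct Hst as [[A B]|[A B]]; [left|right]; split;
          first [apply EF_tl; assumption | apply ET_tl; assumption].
    + destruct (first_differ e e' Hne Hs) as [H1 H2]. rewrite H1. repeat split; try lra; auto.
      exists 1%Z, 1%nat. simpl. field.
Qed.

Lemma neq_ex (e e' : nat -> bool) : e <> e' -> exists k, e k <> e' k.
Proof.
  intro H. apply NNPP. intro N. apply H. extensionality k.
  destruct (Bool.bool_dec (e k) (e' k)); auto. exfalso; apply N; eauto.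
Qed.

Lemma distinct_struct e e' : e <> e' -> sub e = sub e' ->
  D (sub e) /\ 0 < sub e < 1 /\ ((EF e /\ ET e') \/ (ET e /\ EF e')).
Proof. intros H Hs. destruct (neq_ex _ _ H) as [k Hk]. exact (struct k e e' Hk Hs). Qed.

Definition r (u : R) : nat :=
  if Rlt_dec u 0 then O else if Rlt_dec 1 u then O else
  if excluded_middle_informative (0 < u < 1 /\ D u) then 2%nat else 1%nat.

Lemma tail_fiber u : exists l : list (nat -> bool), length l = r u /\ NoDup l /\
  forall e, sub e = u <-> In e l.
Proof.
  unfold r. destruct (Rlt_dec u 0) as [H0|H0]; [|destruct (Rlt_dec 1 u) as [H1|H1]].
  - exists nil. repeat split; [constructor| |]; intros; [|contradiction].
    assert (B := sub_bounds e). lra.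
  - exists nil. repeat split; [constructor| |]; intros; [|contradiction].
    assert (B := sub_bounds e). lra.
  - destruct excluded_middle_informative as [[Hi HD]|HnD].
    + destruct HD as [k [n Hn]].
      destruct (two_reps n u k Hn Hi) as [e1 [e2 [Hne [E1 E2]]]].
      exists (e1 :: e2 :: nil). split; [reflexivity|split].
      * constructor; [simpl; intros [X|X]; [congruence|contradiction]|].
        constructor; [simpl; auto|constructor].
      * intro e. simpl. split.
        -- intro He. destruct (classic (e1 = e)) as [|N1]; [auto|].
           destruct (classic (e2 = e)) as [|N2]; [auto|]. exfalso.
           destruct (distinct_struct e1 e2 Hne ltac:(congruence)) as [_ [_ S12]].
           destruct (distinct_struct e1 e N1 ltac:(congruence)) as [_ [_ S13]].
           destruct (distinct_struct e2 e N2 ltac:(congruence)) as [_ [_ S23]].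
           destruct S12 as [[A B]|[A B]]; destruct S13 as [[C F]|[C F]];
             destruct S23 as [[G H]|[G H]];
             first [exact (EF_ET _ A C) | exact (EF_ET _ C A) | exact (EF_ET _ B G)
                   | exact (EF_ET _ G B) | exact (EF_ET _ F H) | exact (EF_ET _ H F)
                   | exact (EF_ET _ A C) | exact (EF_ET _ F C) | exact (EF_ET _ C F)
                   | exact (EF_ET _ H F) | exact (EF_ET _ B G) | exact (EF_ET _ G B)
                   | idtac].
        -- intros [X|[X|X]]; subst; auto; contradiction.
    + destruct (exists_rep u ltac:(lra)) as [e0 E0].
      exists (e0 :: nil). split; [reflexivity|split].
      * constructor; [simpl; auto|constructor].
      * intro e. simpl. split.
        -- intro He. left. apply NNPP. intro N.
           destruct (distinct_struct e0 e N ltac:(congruence)) as [HD [Hb _]].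
           apply HnD. rewrite E0 in *. auto.
        -- intros [X|X]; [subst; auto|contradiction].
Qed.
Fixpoint seqp (p : list R) : nat -> R :=
  match p with
  | nil => g
  | a :: q => fun n => match n with O => a | S m => seqp q m end
  end.

Fixpoint cnt (p : list R) (u : R) : nat :=
  match p with
  | nil => r u
  | a :: q => (cnt q u + cnt q (u - a))%nat
  end.

Lemma seqp_pos p : List.Forall (fun a => 0 < a) p -> forall n, 0 < seqp p n.
Proof.
  induction p as [|a q IH]; intros Hp n.
  - apply g_pos.
  - inversion Hp; subst. destruct n; simpl; auto.
Qed.

Lemma seqp_ex p : ex_series (seqp p).
Proof.
  induction p as [|a q IH].
  - exact ex_g.
  - apply (proj2 (ex_series_incr_1 (seqp (a :: q)))). exact IH.
Qed.

Lemma subsum_cons a q (e : nat -> bool) : List.Forall (fun a => 0 < a) (a :: q) ->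
  subsum (seqp (a :: q)) e = (if e O then a else 0) + subsum (seqp q) (tl e).
Proof.
  intro Hp. unfold subsum. rewrite Series_incr_1.
  - reflexivity.
  - apply ex_mask; [intro n; left; apply seqp_pos; auto | apply seqp_ex].
Qed.

Lemma in_map_consb b l (e : nat -> bool) : In e (map (consb b) l) <-> e O = b /\ In (tl e) l.
Proof.
  rewrite in_map_iff. split.
  - intros [x [Hx Hin]]. subst e. split; [reflexivity|]. exact Hin.
  - intros [H0 Hin]. exists (tl e). split; auto. extensionality n. destruct n; simpl; auto.
Qed.

Lemma prefix_fiber p : List.Forall (fun a => 0 < a) p -> forall t,
  exists l : list (nat -> bool), length l = cnt p t /\ NoDup l /\
    forall e, subsum (seqp p) e = t <-> In e l.
Proof.
  induction p as [|a q IH]; intros Hp t.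
  - exact (tail_fiber t).
  - assert (Hq : List.Forall (fun a => 0 < a) q) by (inversion Hp; auto).
    destruct (IH Hq t) as [l1 [L1 [N1 M1]]].
    destruct (IH Hq (t - a)) as [l2 [L2 [N2 M2]]].
    exists (map (consb false) l1 ++ map (consb true) l2). split; [|split].
    + rewrite length_app, !length_map. simpl. lia.
    + apply NoDup_app.
      * apply NoDup_map_NoDup_ForallPairs; auto. intros x y _ _ E. eapply consb_inj; eauto.
      * apply NoDup_map_NoDup_ForallPairs; auto. intros x y _ _ E. eapply consb_inj; eauto.
      * intros x H1 H2. apply in_map_consb in H1, H2. destruct H1, H2. congruence.
    + intro e. rewrite subsum_cons by auto. rewrite in_app_iff, !in_map_consb.
      destruct (e O).
      * rewrite <- M2. split; [intro; right; split; auto; lra|].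
        intros [[X _]|[_ X]]; [discriminate|lra].
      * rewrite <- M1. split; [intro; left; split; auto; lra|].
        intros [[_ X]|[X _]]; [lra|discriminate].
Qed.

Lemma card_fin_unique (F : (nat -> bool) -> Prop) n l :
  length l = n -> NoDup l -> (forall e, F e <-> In e l) ->
  forall k, card_is F k -> k = Fin n.
Proof.
  intros L N M k. destruct k as [m| |]; simpl.
  - intros [l' [L' [N' M']]]. f_equal.
    assert (length l <= length l')%nat by (apply NoDup_incl_length; auto; intros x Hx; apply M', M, Hx).
    assert (length l' <= length l)%nat by (apply NoDup_incl_length; auto; intros x Hx; apply M, M', Hx).
    lia.
  - intros [f [Inj Mf]]. exfalso.
    assert (length (map f (seq 0 (S (length l)))) <= length l)%nat.
    { apply NoDup_incl_length.
      - apply NoDup_map_NoDup_ForallPairs; [intros x y _ _ E; auto|apply seq_NoDup].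
      - intros x Hx. apply in_map_iff in Hx. destruct Hx as [i [<- _]]. apply M, Mf. eauto. }
    rewrite length_map, length_seq in H. lia.
  - intros [h [Inj Mh]]. exfalso.
    set (f := fun n : nat => h (fun m => Nat.eqb m n)).
    assert (Inj' : forall x y, f x = f y -> x = y).
    { intros x y E. apply Inj in E. assert (X := f_equal (fun z => z x) E). simpl in X.
      rewrite Nat.eqb_refl in X. symmetry in X. apply Nat.eqb_eq in X. auto. }
    assert (length (map f (seq 0 (S (length l)))) <= length l)%nat.
    { apply NoDup_incl_length.
      - apply NoDup_map_NoDup_ForallPairs; [intros x y _ _ E; auto|apply seq_NoDup].
      - intros x Hx. apply in_map_iff in Hx. destruct Hx as [i [<- _]]. apply M, Mh. exists (fun m => Nat.eqb m i); reflexivity. }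
    rewrite length_map, length_seq in H. lia.
Qed.

Lemma I1_of_prefix p (S : cardinal -> Prop) b :
  List.Forall (fun a => 0 < a) p -> 0 <= b ->
  (forall t, (0 < cnt p t)%nat <-> 0 <= t <= b) ->
  (forall t, (0 < cnt p t)%nat -> S (Fin (cnt p t))) ->
  (forall k, S k -> exists t, k = Fin (cnt p t) /\ (0 < cnt p t)%nat) ->
  in_I1 S.
Proof.
  intros Hp Hb Hint Hin Hex. exists (seqp p). split; [|split; [|split]].
  - apply seqp_pos; auto.
  - apply seqp_ex.
  - exists 0, b. split; auto. intro t. rewrite <- Hint.
    destruct (prefix_fiber p Hp t) as [l [L [N M]]]. unfold achievement. split.
    + intros [e He]. apply M in He. destruct l; [contradiction|simpl in L; lia].
    + intro H. destruct l as [|e l]; [simpl in L; lia|]. exists e. apply M. simpl; auto.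
  - intro k. split.
    + intros [t [Ha Hc]]. destruct (prefix_fiber p Hp t) as [l [L [N M]]].
      rewrite (card_fin_unique _ _ _ L N M k Hc). apply Hin.
      destruct Ha as [e He]. apply M in He. destruct l; [contradiction|simpl in L; lia].
    + intro Hk. destruct (Hex k Hk) as [t [-> Hc]]. exists t.
      destruct (prefix_fiber p Hp t) as [l [L [N M]]]. split.
      * destruct l as [|e l]; [simpl in L; lia|]. exists e. apply M. simpl; auto.
      * simpl. exists l. auto.
Qed.

Lemma r_spec u :
  (r u = 0%nat /\ (u < 0 \/ 1 < u)) \/
  (r u = 1%nat /\ (0 <= u <= 1 /\ (u = 0 \/ u = 1 \/ ~ D u))) \/
  (r u = 2%nat /\ (0 < u < 1 /\ D u)).
Proof.
  unfold r. destruct (Rlt_dec u 0); [left; split; auto|].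
  destruct (Rlt_dec 1 u); [left; split; auto|].
  destruct excluded_middle_informative as [[H1 H2]|H]; [right; right; auto|].
  right; left. split; auto. split; [lra|].
  destruct (Req_dec u 0); auto. destruct (Req_dec u 1); auto.
  right; right. intro HD. apply H. split; auto. lra.
Qed.

Lemma r_zero u : u < 0 \/ 1 < u -> r u = 0%nat.
Proof. intro H. unfold r. destruct (Rlt_dec u 0); auto. destruct (Rlt_dec 1 u); auto. lra. Qed.

Lemma r_end u : u = 0 \/ u = 1 -> r u = 1%nat.
Proof.
  intro H. unfold r. destruct (Rlt_dec u 0); [lra|]. destruct (Rlt_dec 1 u); [lra|].
  destruct excluded_middle_informative as [[H1 _]|]; auto. lra.
Qed.

Lemma r_two u (k : Z) (m : nat) : 0 < u < 1 -> u * 2^m = IZR k -> r u = 2%nat.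
Proof.
  intros H Hk. unfold r. destruct (Rlt_dec u 0); [lra|]. destruct (Rlt_dec 1 u); [lra|].
  destruct excluded_middle_informative as [|N]; auto. exfalso; apply N. split; auto.
  exists k, m. auto.
Qed.

Lemma odd_div_pow2 (b a : Z) (n : nat) : Z.odd b = true ->
  (b | a * 2 ^ Z.of_nat n)%Z -> (b | a)%Z.
Proof.
  intros Hb. apply Z.odd_spec in Hb. destruct Hb as [j Hj].
  induction n; intro H.
  - simpl in H. rewrite Z.mul_1_r in H. auto.
  - apply IHn. set (c := (a * 2 ^ Z.of_nat n)%Z).
    assert (H2 : (b | 2 * c)%Z).
    { unfold c. replace (2 * (a * 2 ^ Z.of_nat n))%Z with (a * 2 ^ Z.of_nat (S n))%Z; auto.
      rewrite Nat2Z.inj_succ, Z.pow_succ_r by lia. ring. }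
    replace c with ((j + 1) * (2 * c) - c * b)%Z by (rewrite Hj; ring).
    apply Z.divide_sub_r; [apply Z.divide_mul_r; auto| apply Z.divide_mul_r; apply Z.divide_refl].
Qed.

Lemma notD w (a b : Z) (m : nat) : Z.odd b = true -> ~ (b | a)%Z ->
  w * IZR b * 2^m = IZR a -> ~ D w.
Proof.
  intros Hb Hd Hw [k [n Hn]]. apply Hd. apply (odd_div_pow2 b a n Hb).
  exists (k * 2 ^ Z.of_nat m)%Z.
  apply eq_IZR. rewrite !mult_IZR, <- !pow_IZR. rewrite <- Hw, <- Hn. ring.
Qed.

Lemma r_nd u (a b : Z) (m : nat) : 0 < u < 1 -> Z.odd b = true -> ~ (b | a)%Z ->
  u * IZR b * 2^m = IZR a -> r u = 1%nat.
Proof.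
  intros H Hb Hd Hw. unfold r. destruct (Rlt_dec u 0); [lra|]. destruct (Rlt_dec 1 u); [lra|].
  destruct excluded_middle_informative as [[_ HD]|N]; auto. exfalso.
  exact (notD u a b m Hb Hd Hw HD).
Qed.

Lemma D_sub u v : D u -> D v -> D (u - v).
Proof.
  intros [k1 [n1 H1]] [k2 [n2 H2]].
  exists (k1 * 2 ^ Z.of_nat n2 - k2 * 2 ^ Z.of_nat n1)%Z, (n1 + n2)%nat.
  rewrite minus_IZR, !mult_IZR, <- !pow_IZR, pow_add, <- H1, <- H2. ring.
Qed.

Lemma Dcontra u v c : D u -> D v -> u - v = c -> ~ D c -> False.
Proof. intros H1 H2 E N. apply N. rewrite <- E. apply D_sub; auto. Qed.

Lemma Dcontra2 u v c : D u -> ~ D v -> u - v = c -> D c -> False.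
Proof. intros H1 H2 E Dc. apply H2. replace v with (u - c) by lra. apply D_sub; auto. Qed.

Ltac rtac := first [ lra | reflexivity | (let q := fresh in let Hq := fresh in intros [q Hq]; lia) | (simpl; lra) ].

Lemma nD13 : ~ D (1/3). Proof. apply (notD _ 1 3 0); rtac. Qed.
Lemma nD23 : ~ D (2/3). Proof. apply (notD _ 2 3 0); rtac. Qed.
Lemma nD43 : ~ D (4/3). Proof. apply (notD _ 4 3 0); rtac. Qed.
Lemma nD16 : ~ D (1/6). Proof. apply (notD _ 1 3 1); rtac. Qed.
Lemma nD56 : ~ D (5/6). Proof. apply (notD _ 5 3 1); rtac. Qed.
Lemma nD76 : ~ D (7/6). Proof. apply (notD _ 7 3 1); rtac. Qed.
Lemma D12 : D (1/2). Proof. exists 1%Z, 1%nat. simpl; lra. Qed.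
Lemma Dm12 : D (-(1/2)). Proof. exists (-1)%Z, 1%nat. simpl; lra. Qed.
Lemma D1 : D 1. Proof. exists 1%Z, 0%nat. simpl; lra. Qed.
Lemma Dm1 : D (-1). Proof. exists (-1)%Z, 0%nat. simpl; lra. Qed.

Ltac dcontra := match goal with
 | H1 : D ?u, H2 : D ?v |- _ =>
   first [ apply (Dcontra u v (1/3) H1 H2); [lra | exact nD13]
         | apply (Dcontra u v (2/3) H1 H2); [lra | exact nD23]
         | apply (Dcontra u v (4/3) H1 H2); [lra | exact nD43]
         | apply (Dcontra u v (1/6) H1 H2); [lra | exact nD16]
         | apply (Dcontra u v (5/6) H1 H2); [lra | exact nD56]
         | apply (Dcontra u v (7/6) H1 H2); [lra | exact nD76] ]
 | H1 : D ?u, H2 : ~ D ?v |- _ =>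
   first [ apply (Dcontra2 u v (1/2) H1 H2); [lra | exact D12]
         | apply (Dcontra2 u v (-(1/2)) H1 H2); [lra | exact Dm12]
         | apply (Dcontra2 u v 1 H1 H2); [lra | exact D1]
         | apply (Dcontra2 u v (-1) H1 H2); [lra | exact Dm1] ]
 end.

Ltac rsplit := repeat match goal with
 | |- context [r ?u] => let E := fresh "E" in
     destruct (r_spec u) as [[E ?]|[[E [? ?]]|[E [? ?]]]]; rewrite E in *; clear E
 end.

Ltac killdisj := repeat match goal with H : _ \/ _ |- _ => destruct H end.

Ltac range_tac := intros t Ht; cbn [cnt] in *; rsplit; try lia; killdisj; exfalso; first [lra | dcontra].

Ltac interval_tac := intro t; cbn [cnt]; rsplit; split; intro; try lia; killdisj; lra.
Definition ex1 : list R := (1/3) :: nil.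

Lemma w1_1 : cnt ex1 (0) = 1%nat.
Proof. unfold ex1; cbn [cnt]. rewrite (r_end (0)) by lra. rewrite (r_zero (0 - 1/3)) by lra. reflexivity. Qed.

Lemma w1_2 : cnt ex1 (1) = 2%nat.
Proof. unfold ex1; cbn [cnt]. rewrite (r_end (1)) by lra. rewrite (r_nd (1 - 1/3) 2 3 0) by rtac. reflexivity. Qed.

Lemma w1_3 : cnt ex1 (1/2) = 3%nat.
Proof. unfold ex1; cbn [cnt]. rewrite (r_two (1/2) 1 1) by (simpl; lra). rewrite (r_nd (1/2 - 1/3) 1 3 1) by rtac. reflexivity. Qed.

Lemma ex1_I1 : in_I1 (fun k => k = Fin 1 \/ k = Fin 2 \/ k = Fin 3).
Proof.
  apply (I1_of_prefix ex1 _ (4/3)).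
  - unfold ex1; repeat constructor; lra.
  - lra.
  - unfold ex1; interval_tac.
  - intros t Ht. assert (HH : cnt ex1 t = 1%nat \/ cnt ex1 t = 2%nat \/ cnt ex1 t = 3%nat) by (revert t Ht; unfold ex1; range_tac).
    destruct HH as [E|[E|E]]; rewrite E; tauto.
  - intros k Hk. destruct Hk as [E|[E|E]]; subst k.

    + exists (0). rewrite w1_1. split; [reflexivity|lia].
    + exists (1). rewrite w1_2. split; [reflexivity|lia].
    + exists (1/2). rewrite w1_3. split; [reflexivity|lia].
Qed.

Definition ex2 : list R := (1/2) :: nil.

Lemma w2_1 : cnt ex2 (0) = 1%nat.
Proof. unfold ex2; cbn [cnt]. rewrite (r_end (0)) by lra. rewrite (r_zero (0 - 1/2)) by lra. reflexivity. Qed.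

Lemma w2_2 : cnt ex2 (2/3) = 2%nat.
Proof. unfold ex2; cbn [cnt]. rewrite (r_nd (2/3) 2 3 0) by rtac. rewrite (r_nd (2/3 - 1/2) 1 3 1) by rtac. reflexivity. Qed.

Lemma w2_3 : cnt ex2 (1) = 3%nat.
Proof. unfold ex2; cbn [cnt]. rewrite (r_end (1)) by lra. rewrite (r_two (1 - 1/2) 1 1) by (simpl; lra). reflexivity. Qed.

Lemma w2_4 : cnt ex2 (3/4) = 4%nat.
Proof. unfold ex2; cbn [cnt]. rewrite (r_two (3/4) 3 2) by (simpl; lra). rewrite (r_two (3/4 - 1/2) 1 2) by (simpl; lra). reflexivity. Qed.

Lemma ex2_I1 : in_I1 (fun k => k = Fin 1 \/ k = Fin 2 \/ k = Fin 3 \/ k = Fin 4).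
Proof.
  apply (I1_of_prefix ex2 _ (3/2)).
  - unfold ex2; repeat constructor; lra.
  - lra.
  - unfold ex2; interval_tac.
  - intros t Ht. assert (HH : cnt ex2 t = 1%nat \/ cnt ex2 t = 2%nat \/ cnt ex2 t = 3%nat \/ cnt ex2 t = 4%nat) by (revert t Ht; unfold ex2; range_tac).
    destruct HH as [E|[E|[E|E]]]; rewrite E; tauto.
  - intros k Hk. destruct Hk as [E|[E|[E|E]]]; subst k.

    + exists (0). rewrite w2_1. split; [reflexivity|lia].
    + exists (2/3). rewrite w2_2. split; [reflexivity|lia].
    + exists (1). rewrite w2_3. split; [reflexivity|lia].
    + exists (3/4). rewrite w2_4. split; [reflexivity|lia].
Qed.

Definition ex3 : list R := (1/2) :: (2/3) :: nil.

Lemma w3_1 : cnt ex3 (0) = 1%nat.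
Proof. unfold ex3; cbn [cnt]. rewrite (r_end (0)) by lra. rewrite (r_zero (0 - 2/3)) by lra. rewrite (r_zero (0 - 1/2)) by lra. rewrite (r_zero (0 - 1/2 - 2/3)) by lra. reflexivity. Qed.

Lemma w3_2 : cnt ex3 (1/4) = 2%nat.
Proof. unfold ex3; cbn [cnt]. rewrite (r_two (1/4) 1 2) by (simpl; lra). rewrite (r_zero (1/4 - 2/3)) by lra. rewrite (r_zero (1/4 - 1/2)) by lra. rewrite (r_zero (1/4 - 1/2 - 2/3)) by lra. reflexivity. Qed.

Lemma w3_3 : cnt ex3 (1/2) = 3%nat.
Proof. unfold ex3; cbn [cnt]. rewrite (r_two (1/2) 1 1) by (simpl; lra). rewrite (r_zero (1/2 - 2/3)) by lra. rewrite (r_end (1/2 - 1/2)) by lra. rewrite (r_zero (1/2 - 1/2 - 2/3)) by lra. reflexivity. Qed.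

Lemma w3_4 : cnt ex3 (1) = 4%nat.
Proof. unfold ex3; cbn [cnt]. rewrite (r_end (1)) by lra. rewrite (r_nd (1 - 2/3) 1 3 0) by rtac. rewrite (r_two (1 - 1/2) 1 1) by (simpl; lra). rewrite (r_zero (1 - 1/2 - 2/3)) by lra. reflexivity. Qed.

Lemma w3_5 : cnt ex3 (3/4) = 5%nat.
Proof. unfold ex3; cbn [cnt]. rewrite (r_two (3/4) 3 2) by (simpl; lra). rewrite (r_nd (3/4 - 2/3) 1 3 2) by rtac. rewrite (r_two (3/4 - 1/2) 1 2) by (simpl; lra). rewrite (r_zero (3/4 - 1/2 - 2/3)) by lra. reflexivity. Qed.

Lemma ex3_I1 : in_I1 (fun k => k = Fin 1 \/ k = Fin 2 \/ k = Fin 3 \/ k = Fin 4 \/ k = Fin 5).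
Proof.
  apply (I1_of_prefix ex3 _ (13/6)).
  - unfold ex3; repeat constructor; lra.
  - lra.
  - unfold ex3; interval_tac.
  - intros t Ht. assert (HH : cnt ex3 t = 1%nat \/ cnt ex3 t = 2%nat \/ cnt ex3 t = 3%nat \/ cnt ex3 t = 4%nat \/ cnt ex3 t = 5%nat) by (revert t Ht; unfold ex3; range_tac).
    destruct HH as [E|[E|[E|[E|E]]]]; rewrite E; tauto.
  - intros k Hk. destruct Hk as [E|[E|[E|[E|E]]]]; subst k.

    + exists (0). rewrite w3_1. split; [reflexivity|lia].
    + exists (1/4). rewrite w3_2. split; [reflexivity|lia].
    + exists (1/2). rewrite w3_3. split; [reflexivity|lia].
    + exists (1). rewrite w3_4. split; [reflexivity|lia].
    + exists (3/4). rewrite w3_5. split; [reflexivity|lia].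
Qed.

Definition ex4 : list R := (1/2) :: (1/2) :: nil.

Lemma w4_1 : cnt ex4 (0) = 1%nat.
Proof. unfold ex4; cbn [cnt]. rewrite (r_end (0)) by lra. rewrite (r_zero (0 - 1/2)) by lra. rewrite (r_zero (0 - 1/2 - 1/2)) by lra. reflexivity. Qed.

Lemma w4_2 : cnt ex4 (1/4) = 2%nat.
Proof. unfold ex4; cbn [cnt]. rewrite (r_two (1/4) 1 2) by (simpl; lra). rewrite (r_zero (1/4 - 1/2)) by lra. rewrite (r_zero (1/4 - 1/2 - 1/2)) by lra. reflexivity. Qed.

Lemma w4_3 : cnt ex4 (2/3) = 3%nat.
Proof. unfold ex4; cbn [cnt]. rewrite (r_nd (2/3) 2 3 0) by rtac. rewrite (r_nd (2/3 - 1/2) 1 3 1) by rtac. rewrite (r_zero (2/3 - 1/2 - 1/2)) by lra. reflexivity. Qed.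

Lemma w4_4 : cnt ex4 (1/2) = 4%nat.
Proof. unfold ex4; cbn [cnt]. rewrite (r_two (1/2) 1 1) by (simpl; lra). rewrite (r_end (1/2 - 1/2)) by lra. rewrite (r_zero (1/2 - 1/2 - 1/2)) by lra. reflexivity. Qed.

Lemma w4_6 : cnt ex4 (1) = 6%nat.
Proof. unfold ex4; cbn [cnt]. rewrite (r_end (1)) by lra. rewrite (r_two (1 - 1/2) 1 1) by (simpl; lra). rewrite (r_end (1 - 1/2 - 1/2)) by lra. reflexivity. Qed.

Lemma ex4_I1 : in_I1 (fun k => k = Fin 1 \/ k = Fin 2 \/ k = Fin 3 \/ k = Fin 4 \/ k = Fin 6).
Proof.
  apply (I1_of_prefix ex4 _ (2)).
  - unfold ex4; repeat constructor; lra.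
  - lra.
  - unfold ex4; interval_tac.
  - intros t Ht. assert (HH : cnt ex4 t = 1%nat \/ cnt ex4 t = 2%nat \/ cnt ex4 t = 3%nat \/ cnt ex4 t = 4%nat \/ cnt ex4 t = 6%nat) by (revert t Ht; unfold ex4; range_tac).
    destruct HH as [E|[E|[E|[E|E]]]]; rewrite E; tauto.
  - intros k Hk. destruct Hk as [E|[E|[E|[E|E]]]]; subst k.

    + exists (0). rewrite w4_1. split; [reflexivity|lia].
    + exists (1/4). rewrite w4_2. split; [reflexivity|lia].
    + exists (2/3). rewrite w4_3. split; [reflexivity|lia].
    + exists (1/2). rewrite w4_4. split; [reflexivity|lia].
    + exists (1). rewrite w4_6. split; [reflexivity|lia].
Qed.

Definition ex5 : list R := (1/2) :: (1/3) :: nil.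

Lemma w5_1 : cnt ex5 (0) = 1%nat.
Proof. unfold ex5; cbn [cnt]. rewrite (r_end (0)) by lra. rewrite (r_zero (0 - 1/3)) by lra. rewrite (r_zero (0 - 1/2)) by lra. rewrite (r_zero (0 - 1/2 - 1/3)) by lra. reflexivity. Qed.

Lemma w5_2 : cnt ex5 (3/2) = 2%nat.
Proof. unfold ex5; cbn [cnt]. rewrite (r_zero (3/2)) by lra. rewrite (r_zero (3/2 - 1/3)) by lra. rewrite (r_end (3/2 - 1/2)) by lra. rewrite (r_nd (3/2 - 1/2 - 1/3) 2 3 0) by rtac. reflexivity. Qed.

Lemma w5_3 : cnt ex5 (2/3) = 3%nat.
Proof. unfold ex5; cbn [cnt]. rewrite (r_nd (2/3) 2 3 0) by rtac. rewrite (r_nd (2/3 - 1/3) 1 3 0) by rtac. rewrite (r_nd (2/3 - 1/2) 1 3 1) by rtac. rewrite (r_zero (2/3 - 1/2 - 1/3)) by lra. reflexivity. Qed.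

Lemma w5_4 : cnt ex5 (1/2) = 4%nat.
Proof. unfold ex5; cbn [cnt]. rewrite (r_two (1/2) 1 1) by (simpl; lra). rewrite (r_nd (1/2 - 1/3) 1 3 1) by rtac. rewrite (r_end (1/2 - 1/2)) by lra. rewrite (r_zero (1/2 - 1/2 - 1/3)) by lra. reflexivity. Qed.

Lemma w5_5 : cnt ex5 (1) = 5%nat.
Proof. unfold ex5; cbn [cnt]. rewrite (r_end (1)) by lra. rewrite (r_nd (1 - 1/3) 2 3 0) by rtac. rewrite (r_two (1 - 1/2) 1 1) by (simpl; lra). rewrite (r_nd (1 - 1/2 - 1/3) 1 3 1) by rtac. reflexivity. Qed.

Lemma w5_6 : cnt ex5 (7/8) = 6%nat.
Proof. unfold ex5; cbn [cnt]. rewrite (r_two (7/8) 7 3) by (simpl; lra). rewrite (r_nd (7/8 - 1/3) 13 3 3) by rtac. rewrite (r_two (7/8 - 1/2) 3 3) by (simpl; lra). rewrite (r_nd (7/8 - 1/2 - 1/3) 1 3 3) by rtac. reflexivity. Qed.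

Lemma ex5_I1 : in_I1 (fun k => k = Fin 1 \/ k = Fin 2 \/ k = Fin 3 \/ k = Fin 4 \/ k = Fin 5 \/ k = Fin 6).
Proof.
  apply (I1_of_prefix ex5 _ (11/6)).
  - unfold ex5; repeat constructor; lra.
  - lra.
  - unfold ex5; interval_tac.
  - intros t Ht. assert (HH : cnt ex5 t = 1%nat \/ cnt ex5 t = 2%nat \/ cnt ex5 t = 3%nat \/ cnt ex5 t = 4%nat \/ cnt ex5 t = 5%nat \/ cnt ex5 t = 6%nat) by (revert t Ht; unfold ex5; range_tac).
    destruct HH as [E|[E|[E|[E|[E|E]]]]]; rewrite E; tauto.
  - intros k Hk. destruct Hk as [E|[E|[E|[E|[E|E]]]]]; subst k.

    + exists (0). rewrite w5_1. split; [reflexivity|lia].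
    + exists (3/2). rewrite w5_2. split; [reflexivity|lia].
    + exists (2/3). rewrite w5_3. split; [reflexivity|lia].
    + exists (1/2). rewrite w5_4. split; [reflexivity|lia].
    + exists (1). rewrite w5_5. split; [reflexivity|lia].
    + exists (7/8). rewrite w5_6. split; [reflexivity|lia].
Qed.

Theorem proposition7p2 :
  in_I1 (fun k => k = Fin 1 \/ k = Fin 2 \/ k = Fin 3) /\
  in_I1 (fun k => k = Fin 1 \/ k = Fin 2 \/ k = Fin 3 \/ k = Fin 4) /\
  in_I1 (fun k => k = Fin 1 \/ k = Fin 2 \/ k = Fin 3 \/ k = Fin 4 \/ k = Fin 5) /\
  in_I1 (fun k => k = Fin 1 \/ k = Fin 2 \/ k = Fin 3 \/ k = Fin 4 \/ k = Fin 6) /\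
  in_I1 (fun k => k = Fin 1 \/ k = Fin 2 \/ k = Fin 3 \/ k = Fin 4 \/ k = Fin 5 \/ k = Fin 6).
Proof.
  exact (conj ex1_I1 (conj ex2_I1 (conj ex3_I1 (conj ex4_I1 ex5_I1)))).
Qed.
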